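(* For every integer $n\ge5$, the coefficient of the monomial $T_nT_{n-1}T_3$ in $R_{n+1}$ is $c^{(n+1)}_{n,n-1,3}=-(n-1)n(n+1)$.
   Context: Let $T_1,T_2,\dots$ be indeterminates, $T_\alpha=T_{\alpha_1}\cdots T_{\alpha_d}$. Define linear operators $L,H$ on monomials (constants sent to $0$): $L(T_{\alpha_1}\cdots T_{\alpha_r})=\sum_{1\le i<j\le r}T_{\alpha_1}\cdots T_{\alpha_i+1}\cdots T_{\alpha_j+1}\cdots T_{\alpha_r}$, $H(T_{\alpha_1}\cdots T_{\alpha_r})=-\frac12\sum_{k=1}^{r}\sum_{l=1}^{\alpha_k-1}\binom{\alpha_k}{l}T_{1+l}T_{1+\alpha_k-l}\prod_{i\ne k}T_{\alpha_i}$. For $n\ge2$ let $A_n=-\sum_{k=1}^{n-1}\binom{n}{k}T_{1+k}T_{1+n-k}T_n$; set $R_2=0$, $R_{n+1}=A_n+L(R_n)+H(R_n)$. $c^{(n)}_\alpha$ is the coefficient of the monomial $T_\alpha$ in $R_n$. *)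

(* Defs.v *)
From mathcomp Require Import all_boot all_order all_algebra.
Set Implicit Arguments. Unset Strict Implicit. Unset Printing Implicit Defensive.
Import Order.TTheory GRing.Theory Num.Theory.
Local Open Scope ring_scope.

(* A monomial T_{a_1}...T_{a_r} is represented by the list [:: a_1; ...; a_r]
   (order irrelevant; two lists denote the same monomial iff perm_eq).
   A polynomial over Q is a finite formal sum: a list of (coefficient, monomial). *)
Definition monom := seq nat.
Definition tpoly := seq (rat * monom).

Definition pscale (c : rat) (p : tpoly) : tpoly := [seq (c * t.1, t.2) | t <- p].

Definition linext (f : monom -> tpoly) (p : tpoly) : tpoly :=
  flatten [seq pscale t.1 (f t.2) | t <- p].

Definition incr2 (a : monom) (i j : nat) : monom :=
  [seq (if (k == i) || (k == j) then (nth 0%N a k).+1 else nth 0%N a k)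
  | k <- iota 0 (size a)].

Definition Lmono (a : monom) : tpoly :=
  [seq (1, incr2 a ij.1 ij.2)
  | ij <- [seq ij <- [seq (i, j) | i <- iota 0 (size a), j <- iota 0 (size a)]
          | (ij.1 < ij.2)%N]].

Definition dropk (a : monom) (k : nat) : monom := take k a ++ drop k.+1 a.

Definition Hmono (a : monom) : tpoly :=
  flatten [seq
     [seq (- (1 / 2%:R) * ('C(nth 0%N a k, l))%:R,
           (1 + l)%N :: (1 + nth 0%N a k - l)%N :: dropk a k)
     | l <- iota 1 (nth 0%N a k).-1]
   | k <- iota 0 (size a)].

Definition Lop := linext Lmono.
Definition Hop := linext Hmono.

Definition Apoly (n : nat) : tpoly :=
  [seq (- ('C(n, k))%:R, [:: (1 + k)%N; (1 + n - k)%N; n]) | k <- iota 1 n.-1].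

(* Rp m = R_{m+2}: R_2 = 0, R_{n+1} = A_n + L(R_n) + H(R_n) *)
Fixpoint Rp (m : nat) : tpoly :=
  match m with
  | 0%N => [::]
  | m'.+1 => let r := Rp m' in Apoly m'.+2 ++ Lop r ++ Hop r
  end.

Definition Rn (n : nat) : tpoly := Rp (n - 2).

Definition coefT (p : tpoly) (alpha : monom) : rat :=
  \sum_(t <- p | perm_eq t.2 alpha) t.1.

(* Main.v *)
Require Import Defs.
From mathcomp Require Import all_boot all_order all_algebra.
From mathcomp Require Import zify ring.
Import GRing.Theory.
Local Open Scope ring_scope.

Local Open Scope nat_scope.
Lemma perm2 (a b c d : nat) : perm_eq [::a;b] [::c;d] = ((a==c)&&(b==d)) || ((a==d)&&(b==c)).
Proof.
apply/idP/idP.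
- move=> H. have : a \in [::c;d] by rewrite -(perm_mem H) mem_head.
  rewrite !inE => /orP [] /eqP Ha; subst a.
  + move: H; rewrite perm_cons => H. have : b \in [::d] by rewrite -(perm_mem H) mem_head.
    by rewrite inE => /eqP ->; rewrite !eqxx.
  + have H2 : perm_eq [::d;b] [::d;c] by apply: (perm_trans H); apply/permP => q /=; lia.
    move: H2; rewrite perm_cons => H2. have : b \in [::c] by rewrite -(perm_mem H2) mem_head.
    by rewrite inE => /eqP ->; rewrite !eqxx ?orbT.
- by case/orP => /andP [/eqP-> /eqP->] //; apply/permP => q /=; lia.
Qed.
Lemma perm3 (a b c d e f : nat) : perm_eq [::a;b;c] [::d;e;f] = [|| [&& a==d, b==e & c==f], [&& a==d, b==f & c==e], [&& a==e, b==d & c==f], [&& a==e, b==f & c==d], [&& a==f, b==d & c==e]| [&& a==f, b==e & c==d]].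
Proof.
apply/idP/idP.
- move=> H. have : a \in [::d;e;f] by rewrite -(perm_mem H) mem_head.
  rewrite !inE => /or3P [] /eqP Ha; subst a.
  + move: H; rewrite perm_cons perm2 eqxx /=.
    by case/orP => /andP [/eqP-> /eqP->]; rewrite !eqxx ?orbT.
  + have H2 : perm_eq [::e;b;c] [::e;d;f] by apply: (perm_trans H); apply/permP => q /=; lia.
    move: H2; rewrite perm_cons perm2 eqxx /=.
    by case/orP => /andP [/eqP-> /eqP->]; rewrite !eqxx ?orbT.
  + have H2 : perm_eq [::f;b;c] [::f;d;e] by apply: (perm_trans H); apply/permP => q /=; lia.
    move: H2; rewrite perm_cons perm2 eqxx /=.
    by case/orP => /andP [/eqP-> /eqP->]; rewrite !eqxx ?orbT.
- by case/or4P => [| | |/or3P[| |]] /and3P [/eqP-> /eqP-> /eqP->]; apply/permP => q /=; lia.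
Qed.

Ltac cs v c := try (case: (v =P c) => [?|?]; [subst v|]).

Lemma P2nat x y z p : 4 <= p -> x <= p.+1 -> y <= p.+1 -> z <= p.+1 ->
 perm_eq [:: x.+1; y.+1; z] [:: 3; p.+1; p.+2] + perm_eq [:: x.+1; y; z.+1] [:: 3; p.+1; p.+2] + perm_eq [:: x; y.+1; z.+1] [:: 3; p.+1; p.+2]
 = 2 * perm_eq [:: x; y; z] [:: 2; p.+1; p.+1] + perm_eq [:: x;y;z] [:: 3; p; p.+1].
Proof.
move=> hp hx hy hz. rewrite !perm3 !eqSS.
have -> : (x == p.+2) = false by apply/eqP; lia.
have -> : (y == p.+2) = false by apply/eqP; lia.
have -> : (z == p.+2) = false by apply/eqP; lia.
have F0 : (p == 0) = false by apply/eqP; lia.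
have F1 : (p == 1) = false by apply/eqP; lia.
have F2 : (p == 2) = false by apply/eqP; lia.
have F3 : (p == 3) = false by apply/eqP; lia.
have F4 : (p == p.+1) = false by apply/eqP; lia.
have F5 : (p.+1 == p) = false by apply/eqP; lia.
have F6 : (p == p.+2) = false by apply/eqP; lia.
have F7 : (p.+2 == p) = false by apply/eqP; lia.
have F8 : (2 == p) = false by apply/eqP; lia.
have F9 : (3 == p) = false by apply/eqP; lia.
have F10 : (1 == p) = false by apply/eqP; lia.
have F11 : (0 == p) = false by apply/eqP; lia.
all: cs x 2. all: cs x 3. all: cs x p. all: cs x p.+1.
all: cs y 2. all: cs y 3. all: cs y p. all: cs y p.+1.
all: cs z 2. all: cs z 3. all: cs z p. all: cs z p.+1.
all: by rewrite /= ?eqSS ?eqxx ?F0 ?F1 ?F2 ?F3 ?F4 ?F5 ?F6 ?F7 ?F8 ?F9 ?F10 ?F11.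
Qed.

Lemma P1nat x y z p : 2 <= p -> x <= p.+1 -> y <= p.+1 -> z <= p.+1 ->
 perm_eq [:: x.+1; y.+1; z] [:: 2; p.+2; p.+2] + perm_eq [:: x.+1; y; z.+1] [:: 2; p.+2; p.+2] + perm_eq [:: x; y.+1; z.+1] [:: 2; p.+2; p.+2]
 = perm_eq [:: x; y; z] [:: 2; p.+1; p.+1].
Proof.
move=> hp hx hy hz. rewrite !perm3 !eqSS.
have -> : (x == p.+2) = false by apply/eqP; lia.
have -> : (y == p.+2) = false by apply/eqP; lia.
have -> : (z == p.+2) = false by apply/eqP; lia.
have F0 : (p == 0) = false by apply/eqP; lia.
have F1 : (p == 1) = false by apply/eqP; lia.
have F4 : (p == p.+1) = false by apply/eqP; lia.
have F5 : (p.+1 == p) = false by apply/eqP; lia.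
have F10 : (1 == p) = false by apply/eqP; lia.
have F11 : (0 == p) = false by apply/eqP; lia.
all: cs x 1. all: cs x 2. all: cs x p.+1.
all: cs y 1. all: cs y 2. all: cs y p.+1.
all: cs z 1. all: cs z 2. all: cs z p.+1.
all: by rewrite /= ?eqSS ?eqxx ?F0 ?F1 ?F4 ?F5 ?F10 ?F11.
Qed.

Lemma A1nat p k : 1 <= p -> 1 <= k -> k <= p.+1 ->
  perm_eq [:: 1 + k; 1 + p.+2 - k; p.+2] [:: 2; p.+2; p.+2] = (k == 1) + (k == p.+1) :> nat.
Proof.
move=> hp hk1 hk2. have hj : k + (1 + p.+2 - k) = p.+3 by lia.
rewrite add1n. move: hj; set j := (1 + p.+2 - k) => hj. clearbody j.
rewrite !perm3 !eqSS.
have F0 : (p == 0) = false by apply/eqP; lia.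
have F4 : (p == p.+1) = false by apply/eqP; lia.
have F5 : (p.+1 == p) = false by apply/eqP; lia.
have F11 : (0 == p) = false by apply/eqP; lia.
all: cs k 1. all: cs k p.+1. all: cs j 2. all: cs j p.+2.
all: rewrite /= ?eqSS ?eqxx ?F0 ?F4 ?F5 ?F11 //.
all: try (exfalso; lia).
Qed.

Lemma A2nat p k : 3 <= p -> 1 <= k -> k <= p.+1 ->
  perm_eq [:: 1 + k; 1 + p.+2 - k; p.+2] [:: 3; p.+1; p.+2] = (k == 2) + (k == p) :> nat.
Proof.
move=> hp hk1 hk2. have hj : k + (1 + p.+2 - k) = p.+3 by lia.
rewrite add1n. move: hj; set j := (1 + p.+2 - k) => hj. clearbody j.
rewrite !perm3 !eqSS.
have F0 : (p == 0) = false by apply/eqP; lia.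
have F1 : (p == 1) = false by apply/eqP; lia.
have F4 : (p == p.+1) = false by apply/eqP; lia.
have F5 : (p.+1 == p) = false by apply/eqP; lia.
have F6 : (p == p.+2) = false by apply/eqP; lia.
have F7 : (p.+2 == p) = false by apply/eqP; lia.
have F10 : (1 == p) = false by apply/eqP; lia.
have F11 : (0 == p) = false by apply/eqP; lia.
have F2 : (p == 2) = false by apply/eqP; lia.
have F8 : (2 == p) = false by apply/eqP; lia.
all: cs k 2. all: cs k p. all: cs k p.+1. all: cs j 3. all: cs j p.+1. all: cs j p.+2.
all: rewrite /= ?eqSS ?eqxx ?F0 ?F1 ?F2 ?F4 ?F5 ?F6 ?F7 ?F8 ?F10 ?F11 //.
all: try (exfalso; lia).
Qed.

Local Open Scope ring_scope.

Lemma coefT_ind (p : tpoly) a : coefT p a = \sum_(t <- p) t.1 * (perm_eq t.2 a)%:R.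
Proof. rewrite /coefT big_mkcond; apply: eq_bigr => t _; by case: ifP; rewrite ?mulr1 ?mulr0. Qed.

Lemma coefT_cat p q a : coefT (p ++ q) a = coefT p a + coefT q a.
Proof. by rewrite /coefT big_cat. Qed.

Lemma coefT_linext f p a : coefT (linext f p) a = \sum_(t <- p) t.1 * coefT (f t.2) a.
Proof.
rewrite /coefT /linext big_flatten big_map; apply: eq_bigr => t _.
by rewrite /pscale big_map mulr_sumr /=.
Qed.

Lemma coefT0 (q : tpoly) a : (forall u, u \in q -> size u.2 != size a) -> coefT q a = 0.
Proof.
move=> H; rewrite /coefT big1_seq // => u /andP [hp hu].
by move: (H u hu); rewrite (perm_size hp) eqxx.
Qed.

Lemma Lmono_size a u : u \in Lmono a -> size u.2 = size a.
Proof. by rewrite /Lmono => /mapP [ij _ ->] /=; rewrite /incr2 size_map size_iota. Qed.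

Lemma Lmono_bound B a u : all (fun x => x <= B)%N a -> u \in Lmono a -> all (fun x => (x <= B.+1)%N) u.2.
Proof.
move=> hb /mapP [ij _ ->] /=. rewrite /incr2 all_map; apply/allP => k; rewrite mem_iota add0n => /andP [_ hk] /=.
have := allP hb (nth 0%N a k) (mem_nth 0%N hk). by case: ifP => _ /=; lia.
Qed.

Lemma Hmono_prop a u : u \in Hmono a -> size u.2 = ((size a).+1)%N /\ (forall B, all (fun x => x <= B)%N a -> all (fun x => x <= B)%N u.2).
Proof.
rewrite /Hmono => /flattenP [s /mapP [k hk ->]] /mapP [l hl ->] /=.
move: hk; rewrite mem_iota add0n => /andP [_ hk].
move: hl; rewrite mem_iota => /andP [hl1 hl2].
split.
- rewrite /dropk size_cat size_take size_drop hk. lia.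
- move=> B hb. have hn : (nth 0%N a k <= B)%N := allP hb _ (mem_nth 0%N hk).
  apply/andP; split; first lia. apply/andP; split; first lia.
  rewrite /dropk all_cat; apply/andP; split; apply/allP => x hx; apply: (allP hb).
  + exact: mem_take hx.
  + exact: mem_drop hx.
Qed.

Definition okm (B : nat) (a : monom) := (3 <= size a)%N && all (fun x => x <= B)%N a.

Lemma linext_all (Q : monom -> bool) f p : (forall t, t \in p -> forall u, u \in f t.2 -> Q u.2) -> all (fun u => Q u.2) (linext f p).
Proof. move=> H; apply/allP => u /flattenP [s /mapP [t ht ->]] /mapP [v hv ->] /=; exact: H ht v hv. Qed.

Lemma Rp_ok m : all (fun t => okm m.+1 t.2) (Rp m).
Proof.
elim: m => [//|m IH].
have -> : Rp m.+1 = Apoly m.+2 ++ Lop (Rp m) ++ Hop (Rp m) by [].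
rewrite !all_cat; apply/and3P; split.
- rewrite /Apoly all_map; apply/allP => k; rewrite mem_iota => /andP [h1 h2] /=.
  rewrite /okm /=. apply/and4P; split; lia.
- apply: linext_all => t ht u hu. have /andP [hs hb] := allP IH t ht.
  rewrite /okm (Lmono_size _ _ hu) hs /=. exact: (Lmono_bound _ _ _ hb hu).
- apply: linext_all => t ht u hu. have /andP [hs hb] := allP IH t ht.
  have [h1 h2] := Hmono_prop _ _ hu. rewrite /okm h1. apply/andP; split; first by rewrite ltnS ltnW.
  apply: h2. apply/allP => x hx; have := allP hb x hx; lia.
Qed.

Lemma coefT_Hop0 B p a : all (fun t => okm B t.2) p -> size a = 3%N -> coefT (Hop p) a = 0.
Proof.
move=> hp ha; rewrite coefT_linext big1_seq // => t /andP [_ ht].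
rewrite coefT0 ?mulr0 // => u hu. have [h1 _] := Hmono_prop _ _ hu.
have /andP [hs _] := allP hp t ht. rewrite h1 ha. apply/eqP; lia.
Qed.

Lemma step m a : size a = 3%N -> coefT (Rp m.+1) a = coefT (Apoly m.+2) a + \sum_(t <- Rp m) t.1 * coefT (Lmono t.2) a.
Proof.
move=> ha. have -> : Rp m.+1 = Apoly m.+2 ++ Lop (Rp m) ++ Hop (Rp m) by [].
by rewrite !coefT_cat (coefT_Hop0 _ _ _ (Rp_ok m) ha) addr0 /Lop coefT_linext.
Qed.

Lemma Lmono3 x y z a : coefT (Lmono [:: x; y; z]) a =
  (perm_eq [:: x.+1; y.+1; z]%N a)%:R + (perm_eq [:: x.+1; y; z.+1]%N a)%:R + (perm_eq [:: x; y.+1; z.+1]%N a)%:R.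
Proof. rewrite coefT_ind /Lmono /= /incr2 /= !big_cons big_nil /= !mul1r addr0 addrA. done. Qed.

Lemma sum_pick (r : seq nat) (F : nat -> rat) j : uniq r -> j \in r -> \sum_(k <- r) F k * (k == j)%:R = F j.
Proof.
move=> u hj; rewrite (bigD1_seq j) //= eqxx mulr1 big1 ?addr0 // => k /negbTE ->; by rewrite mulr0.
Qed.

Lemma A1 p : (1 <= p)%N -> coefT (Apoly p.+2) [:: 2; p.+2; p.+2]%N = - (2 * p.+2)%N%:R.
Proof.
move=> hp. rewrite coefT_ind /Apoly big_map.
rewrite (eq_big_seq (fun k => - ('C(p.+2,k))%:R * (k == 1%N)%:R + - ('C(p.+2,k))%:R * (k == p.+1)%N%:R)); last first.
  move=> k; rewrite mem_iota => /andP [h1 h2]. rewrite (A1nat p k hp h1) ?natrD ?mulrDr //.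
rewrite big_split !sum_pick ?iota_uniq ?mem_iota //; try lia.
rewrite bin1 binSn /= -opprD -natrD. congr (- _%:R). lia.
Qed.

Lemma A2 p : (3 <= p)%N -> coefT (Apoly p.+2) [:: 3; p.+1; p.+2]%N = - (p.+2 * p.+1)%N%:R.
Proof.
move=> hp. rewrite coefT_ind /Apoly big_map.
rewrite (eq_big_seq (fun k => - ('C(p.+2,k))%:R * (k == 2%N)%:R + - ('C(p.+2,k))%:R * (k == p)%:R)); last first.
  move=> k; rewrite mem_iota => /andP [h1 h2]. rewrite (A2nat p k hp h1) ?natrD ?mulrDr //; lia.
rewrite big_split !sum_pick ?iota_uniq ?mem_iota //; try lia.
have E : ('C(p.+2, p) = 'C(p.+2, 2))%N by rewrite -(bin_sub (_ : 2 <= p.+2)%N) ?subSS ?subn0.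
have E2 : (2 * 'C(p.+2, 2) = p.+2 * p.+1)%N by rewrite -(mul_bin_diag p.+2 1) bin1.
rewrite E /= -opprD -natrD. congr (- _%:R). lia.
Qed.

Lemma P1sum p : (2 <= p)%N -> \sum_(t <- Rp p) t.1 * coefT (Lmono t.2) [:: 2; p.+2; p.+2]%N = coefT (Rp p) [:: 2; p.+1; p.+1]%N.
Proof.
move=> hp. rewrite [RHS]coefT_ind. apply: eq_big_seq => t ht.
have /andP [hs hb] := allP (Rp_ok p) t ht.
case: t ht hs hb => c a _ /= hs hb.
case: a hs hb => [|x [|y [|z [|w a]]]] //= hs hb.
- move: hb => /and4P [hx hy hz _].
  by rewrite Lmono3 -!natrD (P1nat _ _ _ _ hp hx hy hz).
- rewrite coefT0; last by move=> u hu; rewrite (Lmono_size _ _ hu).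
  have -> : perm_eq [:: x, y, z, w & a] [:: 2; p.+1; p.+1]%N = false by apply/negP => /perm_size.
  by rewrite !mulr0.
Qed.

Lemma P2sum p : (4 <= p)%N -> \sum_(t <- Rp p) t.1 * coefT (Lmono t.2) [:: 3; p.+1; p.+2]%N =
  2%:R * coefT (Rp p) [:: 2; p.+1; p.+1]%N + coefT (Rp p) [:: 3; p; p.+1]%N.
Proof.
move=> hp. rewrite !coefT_ind mulr_sumr -big_split /=. apply: eq_big_seq => t ht.
have /andP [hs hb] := allP (Rp_ok p) t ht.
case: t ht hs hb => c a _ /= hs hb.
case: a hs hb => [|x [|y [|z [|w a]]]] //= hs hb.
- move: hb => /and4P [hx hy hz _].
  rewrite Lmono3 -!natrD (P2nat _ _ _ _ hp hx hy hz) natrD natrM. ring.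
- rewrite coefT0; last by move=> u hu; rewrite (Lmono_size _ _ hu).
  have -> : perm_eq [:: x, y, z, w & a] [:: 2; p.+1; p.+1]%N = false by apply/negP => /perm_size.
  have -> : perm_eq [:: x, y, z, w & a] [:: 3; p; p.+1]%N = false by apply/negP => /perm_size.
  by rewrite !mulr0 addr0.
Qed.

Lemma F1 d : coefT (Rp d.+2) [:: 2; d.+3; d.+3]%N = - (d.+4 * d.+3)%N%:R.
Proof.
elim: d => [|d IH].
  rewrite /coefT unlock; apply/eqP; vm_compute; reflexivity.
rewrite step // (A1 d.+2) // (P1sum d.+2) // IH -opprD -natrD. congr (- _%:R). nia.
Qed.

Lemma G d : coefT (Rp d.+4) [:: 3; d.+4; d.+4.+1]%N = - (d.+4 * d.+4.+1 * d.+4.+2)%N%:R.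
Proof.
elim: d => [|d IH].
  rewrite /coefT unlock; apply/eqP; vm_compute; reflexivity.
rewrite step // (A2 d.+4) // (P2sum d.+4) // (F1 d.+2) IH.
rewrite !natrM. ring.
Qed.

Lemma coefT_perm p a b : perm_eq a b -> coefT p a = coefT p b.
Proof.
move=> hab; apply: eq_bigl => t /=; apply/idP/idP => h.
- exact: perm_trans h hab.
- apply: perm_trans h _; by rewrite perm_sym.
Qed.

Theorem mainTheorem14 (n : nat) (hn : (5 <= n)%N) :
  coefT (Rn n.+1) [:: n; n.-1; 3%N] = - ((n.-1 * n * n.+1)%N%:R : rat).
Proof.
have [d ->] : exists d, n = d.+4.+1 by exists (n - 5)%N; lia.
rewrite /Rn.
have -> : (d.+4.+2 - 2)%N = d.+4 by [].
rewrite (coefT_perm _ _ [:: 3; d.+4; d.+4.+1]%N); last by apply/permP => q /=; lia.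
exact: G.
Qed.
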